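(* Let $A,A_1,A_2,\ldots$ be band operators on $\ell^2(\mathbb{Z})$ such that $\sup_m\|A_m\|<\infty$ and the band-widths of $A$ and all $A_m$ are bounded by a common $w\in\mathbb{N}$. If \[ \forall N\in\mathbb{N}\ \exists m_0\in\mathbb{N}\ \forall m\ge m_0:\quad\mathcal{C}_N(A_m)=\mathcal{C}_N(A), \] then $\nu(A_m)\to\nu(A)$ and, in fact, $\nu(A_m-\lambda)\to\nu(A-\lambda)$ for every $\lambda\in\mathbb{C}$, as $m\to\infty$.
   Context: A band operator on $\ell^2(\mathbb{Z})$ with band-width at most $w$ is a bounded operator whose matrix entries satisfy $A_{ij}=0$ for $|i-j|>w$. The lower norm is $\nu(T):=\inf\{\|Tx\|:\|x\|=1\}$. For $N\in\mathbb{N}$, $\mathcal{C}_N(A)$ is the set of all $(N+2w)\times N$ matrices $C=(C_{ij})_{i\in1-w..N+w,\,j\in1..N}$ with $C_{ij}=A_{k+i,k+j}$ for some $k\in\mathbb{Z}$ (the ''$N$-column submatrices'' of $A$), where $a..b:=\{n\in\mathbb{Z}:a\le n\le b\}$. *)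

(* Defs.v *)
From HB Require Import structures.
From mathcomp Require Import all_boot all_order all_algebra.
From mathcomp Require Import all_classical all_reals.
From mathcomp Require Import all_analysis.
From mathcomp Require Import complex.
Set Implicit Arguments. Unset Strict Implicit. Unset Printing Implicit Defensive.
Import Order.TTheory GRing.Theory Num.Theory.
Local Open Scope ring_scope.
Local Open Scope classical_set_scope.

Definition csq (R : realType) (z : R[i]) : R := (complex.Re z) ^+ 2 + (complex.Im z) ^+ 2.

Definition sumsq (R : realType) (x : int -> R[i]) : \bar R :=
  (\esum_(i in [set: int]) (csq (x i))%:E)%E.
Definition in_l2 (R : realType) (x : int -> R[i]) : Prop := (sumsq x < +oo)%E.
Definition l2norm (R : realType) (x : int -> R[i]) : R := Num.sqrt (fine (sumsq x)).

Definition bandwidth_le (R : realType) (a : int -> int -> R[i]) (w : nat) : Prop :=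
  forall i j : int, (w < `|i - j|)%N -> a i j = 0.

Definition band_apply (R : realType) (w : nat) (a : int -> int -> R[i]) (x : int -> R[i]) : int -> R[i] :=
  fun i => \sum_(k < (2 * w).+1) a i (i - w%:Z + k%:Z) * x (i - w%:Z + k%:Z).

Definition op_norm_le (R : realType) (w : nat) (a : int -> int -> R[i]) (M : R) : Prop :=
  forall x, in_l2 x -> in_l2 (band_apply w a x) /\ l2norm (band_apply w a x) <= M * l2norm x.

Definition bounded_op (R : realType) (w : nat) (a : int -> int -> R[i]) : Prop :=
  exists M : R, op_norm_le w a M.

Definition is_band (R : realType) (w : nat) (a : int -> int -> R[i]) : Prop :=
  bandwidth_le a w /\ bounded_op w a.

Definition lower_norm (R : realType) (w : nat) (a : int -> int -> R[i]) : R :=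
  inf [set l2norm (band_apply w a x) | x in [set x | in_l2 x /\ l2norm x = 1]].

Definition minus_scalar (R : realType) (a : int -> int -> R[i]) (lam : R[i]) : int -> int -> R[i] :=
  fun i j => a i j - (if i == j then lam else 0).

(* N-column submatrix at offset k: rows i in 1-w..N+w, columns j in 1..N;
   row index r : 'I_(N+2w) stands for i = r + 1 - w, column c : 'I_N for j = c + 1. *)
Definition colsubmx (R : realType) (w N : nat) (a : int -> int -> R[i]) (k : int)
  : 'M[R[i]]_(N + 2 * w, N) :=
  \matrix_(r < N + 2 * w, c < N) a (k + (r%:Z + 1 - w%:Z)) (k + (c%:Z + 1)).

Definition CN (R : realType) (w N : nat) (a : int -> int -> R[i]) : set 'M[R[i]]_(N + 2 * w, N) :=
  [set colsubmx w N a k | k in [set: int]].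

Arguments colsubmx {R} w N a k.
Arguments CN {R} w N a.

(* Main.v *)
Require Import Defs.
From HB Require Import structures.
From mathcomp Require Import all_boot all_order all_algebra.
From mathcomp Require Import all_classical all_reals.
From mathcomp Require Import all_analysis.
From mathcomp Require Import complex.
From mathcomp Require Import zify ring lra.
Import Order.TTheory GRing.Theory Num.Theory numFieldNormedType.Exports.
Local Open Scope ring_scope.
Local Open Scope classical_set_scope.

Section Aux.
Variable R : realType.
Implicit Types (u v z : R[i]).

Lemma csq_ge0 z : 0 <= csq z.
Proof. by rewrite /csq addr_ge0 // sqr_ge0. Qed.

Lemma csq0 : csq (0 : R[i]) = 0.
Proof. by rewrite /csq /= expr0n /= addr0. Qed.

Lemma csqM u v : csq (u * v) = csq u * csq v.
Proof. case: u => a b; case: v => c d; rewrite /csq /=; ring. Qed.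

Lemma csqN u : csq (- u) = csq u.
Proof. case: u => a b; rewrite /csq /=; ring. Qed.

Lemma csqB u v : csq (u - v) = csq (v - u).
Proof. by rewrite -csqN opprB. Qed.

Lemma csq_bool (b : bool) : csq (b%:R : R[i]) = b%:R.
Proof. by case: b; rewrite /csq /= ?expr1n ?expr0n /= ?addr0. Qed.

Lemma csq_real (r : R) u : csq ((r%:C)%C * u) = r ^+ 2 * csq u.
Proof. case: u => a b; rewrite /csq /=; ring. Qed.

Lemma csqD_le (d : R) u v : 0 < d ->
  csq (u + v) <= (1 + d) * csq u + (1 + d^-1) * csq v.
Proof.
move=> d0; case: u => a b; case: v => c e; rewrite /csq /=.
have dn : d != 0 by rewrite gt_eqF.
rewrite -subr_ge0.
have -> : (1 + d) * (a ^+ 2 + b ^+ 2) + (1 + d^-1) * (c ^+ 2 + e ^+ 2) -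
   ((a + c) ^+ 2 + (b + e) ^+ 2) = d^-1 * ((d * a - c) ^+ 2 + (d * b - e) ^+ 2).
  by field.
by apply: mulr_ge0; [rewrite invr_ge0 ltW | rewrite addr_ge0 // sqr_ge0].
Qed.

Lemma csq_sum n (z : 'I_n -> R[i]) :
  csq (\sum_(k < n) z k) <= n%:R * \sum_(k < n) csq (z k).
Proof.
elim: n z => [|n IH] z; first by rewrite !big_ord0 csq0 mul0r.
rewrite !big_ord_recr /=.
case: n IH z => [|n] IH z.
  by rewrite !big_ord0 !add0r mul1r.
set S := \sum_(i < n.+1) z (widen_ord (leqnSn n.+1) i).
set T := \sum_(i < n.+1) csq (z (widen_ord (leqnSn n.+1) i)).
have hS : csq S <= n.+1%:R * T by apply: IH.
have np : 0 < (n.+1%:R : R) by rewrite ltr0n.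
have h1 := csqD_le (n.+1%:R : R) (z ord_max) S np; rewrite addrC in h1.
have h0 : 0 <= csq (z ord_max) := csq_ge0 _.
have -> : (n.+2%:R : R) = n.+1%:R + 1 by rewrite -natr1.
have e1 : (1 + (n.+1%:R : R)^-1) * (n.+1%:R * T) = (n.+1%:R + 1) * T.
  by field; rewrite gt_eqF.
have h2 : 0 <= T * 1 by rewrite mulr1 sumr_ge0 // => i _; exact: csq_ge0.
have hp : 0 <= 1 + (n.+1%:R : R)^-1 by rewrite addr_ge0 // invr_ge0 ltW.
have := ler_wpM2l hp hS.
rewrite e1 => h.
have : (1 + n.+1%:R) * csq (z ord_max) = n.+1%:R * csq (z ord_max) + 1 * csq (z ord_max) by ring.
move=> _; clear e1 h2 hp hS; move: h1 h; move: (csq (S + z ord_max)) (csq S) (csq (z ord_max)) T (n.+1%:R : R) => X Y Z T' a h1 h; nra.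
Qed.


Definition fs (f : int -> R) (lo : int) (n : nat) : R := \sum_(k < n) f (lo + k%:Z).
Definition inwin (lo : int) (n : nat) (i : int) : bool := (lo <= i) && (i < lo + n%:Z).

Lemma esum_fin (f : int -> R) lo n : (forall i, 0 <= f i) ->
  (forall i, ~~ inwin lo n i -> f i = 0) ->
  (\esum_(i in [set: int]) (f i)%:E)%E = (fs f lo n)%:E.
Proof.
move=> f0 fout.
have -> : (\esum_(i in [set: int]) (f i)%:E)%E = (\esum_(i in [set i | inwin lo n i]) (f i)%:E)%E.
  rewrite [RHS]esum_mkcond; apply: eq_esum => i _.
  case: ifPn => // /negP hi; rewrite fout //; apply/negP => h; apply: hi; rewrite inE; exact: h.
rewrite (reindex_esum [set k : nat | (k < n)%N] _ (fun k : nat => lo + k%:Z)); last first.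
  split.
  - move=> k /= kn; rewrite /inwin; apply/andP; split; lia.
  - move=> a b _ _; lia.
  - move=> i /= /andP[h1 h2]; exists `|i - lo|%N => /=; lia.
rewrite esum_fset //; last by move=> i _; rewrite lee_fin.
rewrite -fsbig_ord /fs; rewrite -sumEFin; apply: eq_bigr => k _ //.
Qed.

Lemma fs_ge0 (f : int -> R) lo n : (forall i, 0 <= f i) -> 0 <= fs f lo n.
Proof. by move=> f0; apply: sumr_ge0 => k _. Qed.

Lemma inwin_k lo n (k : 'I_n) : inwin lo n (lo + k%:Z).
Proof. have := ltn_ord k; rewrite /inwin => h; apply/andP; split; lia. Qed.

Definition restr (f : int -> R) lo n := fun i => if inwin lo n i then f i else 0.

Lemma fs_restr f lo n : fs (restr f lo n) lo n = fs f lo n.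
Proof. by apply: eq_bigr => k _; rewrite /restr inwin_k. Qed.

Lemma fs_mono_win (f : int -> R) lo n lo' n' : (forall i, 0 <= f i) ->
  (forall i, inwin lo n i -> f i != 0 -> inwin lo' n' i) ->
  fs f lo n <= fs f lo' n'.
Proof.
move=> f0 hsub.
have g0 : forall i, 0 <= restr f lo n i by move=> i; rewrite /restr; case: ifP.
have e1 := esum_fin _ _ _ g0 (fun i (h : ~~ inwin lo n i) => ifN _ _ h).
have e2 : (\esum_(i in [set: int]) (restr f lo n i)%:E)%E = (fs (restr f lo n) lo' n')%:E.
  apply: esum_fin => // i hi; rewrite /restr; case: ifP => // hw.
  by apply/eqP; apply: contraNT hi; apply: hsub.
have e3 : fs (restr f lo n) lo n = fs (restr f lo n) lo' n' by apply: EFin_inj; rewrite -e1 -e2.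
rewrite -(fs_restr f lo n) e3.
by apply: ler_sum => k _; rewrite /restr; case: ifP.
Qed.

Lemma fs_win_eq (f : int -> R) lo n lo' n' : (forall i, 0 <= f i) ->
  (forall i, ~~ inwin lo n i -> f i = 0) -> (forall i, ~~ inwin lo' n' i -> f i = 0) ->
  fs f lo n = fs f lo' n'.
Proof. by move=> f0 h1 h2; apply: EFin_inj; rewrite -(esum_fin _ _ _ f0 h1) -(esum_fin _ _ _ f0 h2). Qed.

Lemma fin_le_esum (f : int -> R) lo n : (forall i, 0 <= f i) ->
  ((fs f lo n)%:E <= \esum_(i in [set: int]) (f i)%:E)%E.
Proof.
move=> f0.
have g0 : forall i, 0 <= restr f lo n i by move=> i; rewrite /restr; case: ifP.
rewrite -(fs_restr f lo n) -(esum_fin _ _ _ g0 (fun i (h : ~~ inwin lo n i) => ifN _ _ h)).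
by apply: le_esum => i _; rewrite lee_fin /restr; case: ifP.
Qed.

Lemma fs_shift (f : int -> R) c lo n : fs (fun i => f (i + c)) lo n = fs f (lo + c) n.
Proof. by apply: eq_bigr => k _; congr f; ring. Qed.

Lemma finite_win (F : set int) : finite_set F ->
  exists M : nat, forall i, F i -> inwin (- M%:Z) (2 * M).+1 i.
Proof.
move=> finF; exists (\max_(i <- (finmap.enum_fset (fset_set F))) `|i|%N) => i Fi.
have : (`|i| <= \max_(i <- (finmap.enum_fset (fset_set F))) `|i|)%N.
  by apply: (@leq_bigmax_seq _ _ xpredT (fun i : int => `|i|%N)); rewrite ?in_fset_set // inE.
move: (\max_(i <- (finmap.enum_fset (fset_set F))) `|i|%N) => M hM; rewrite /inwin; apply/andP; split; lia.
Qed.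

Lemma esum_le_win (f : int -> R) (C : R) : (forall i, 0 <= f i) ->
  (forall lo n, fs f lo n <= C) -> (\esum_(i in [set: int]) (f i)%:E <= C%:E)%E.
Proof.
move=> f0 hC; apply: ge_ereal_sup => _ [F [finF _] <-].
have [M hM] := finite_win _ finF.
rewrite -esum_fset //; last by move=> i _; rewrite lee_fin.
rewrite esum_mkcond; apply: (@le_trans _ _ (\esum_(i in [set: int]) (restr f (- M%:Z) (2 * M).+1 i)%:E)%E).
  apply: le_esum => i _; case: ifPn => [iF|_]; last by rewrite lee_fin /restr; case: ifP.
  by rewrite /restr hM //; rewrite inE in iF.
have g0 : forall i, 0 <= restr f (- M%:Z) (2 * M).+1 i by move=> i; rewrite /restr; case: ifP.
rewrite (esum_fin _ _ _ g0 (fun i (h : ~~ inwin _ _ i) => ifN _ _ h)) lee_fin fs_restr; exact: hC.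
Qed.


Lemma chi_diff (t i : int) (N w k : nat) : (k <= 2 * w)%N ->
  inwin t N (i - w%:Z + k%:Z) != inwin t N i ->
  inwin t (2 * w).+1 (i + w%:Z) || inwin (t + N%:Z) (2 * w).+1 (i + w%:Z).
Proof.
rewrite /inwin => hk.
case: (boolP (t <= i - w%:Z + k%:Z)); case: (boolP (i - w%:Z + k%:Z < t + N%:Z));
case: (boolP (t <= i)); case: (boolP (i < t + N%:Z)) => //= *;
apply/orP; (try (left; apply/andP; split; lia)); (try (right; apply/andP; split; lia)).
Qed.

Implicit Types (x y : int -> R[i]).

Lemma eqle (p q : R) : p = q -> p <= q. Proof. by move->. Qed.

Definition nrm2 (x : int -> R[i]) : R := fine (sumsq x).
Definition supp (x : int -> R[i]) lo n := forall i, ~~ inwin lo n i -> x i = 0.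
Definition sqf (x : int -> R[i]) : int -> R := fun i => csq (x i).

Lemma sqf_ge0 x i : 0 <= sqf x i. Proof. exact: csq_ge0. Qed.

Lemma sumsq_ge0 x : (0 <= sumsq x)%E.
Proof. by apply: esum_ge0 => i _; rewrite lee_fin; exact: csq_ge0. Qed.

Lemma l2E x : in_l2 x -> sumsq x = (nrm2 x)%:E.
Proof.
move=> hx; rewrite /nrm2 fineK //; apply/fin_numP; split.
  by apply/negP => /eqP h; have := sumsq_ge0 x; rewrite h.
by apply/negP => /eqP h; move: hx; rewrite /in_l2 h ltxx.
Qed.

Lemma nrm2_ge0 x : 0 <= nrm2 x.
Proof. by rewrite /nrm2 fine_ge0 // sumsq_ge0. Qed.

Lemma sumsq_fin x lo n : supp x lo n -> sumsq x = (fs (sqf x) lo n)%:E.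
Proof.
move=> hs; rewrite /sumsq; apply: esum_fin => [i|i hi]; first exact: csq_ge0.
by rewrite /sqf hs // csq0.
Qed.

Lemma in_l2_fin x lo n : supp x lo n -> in_l2 x.
Proof. by move=> hs; rewrite /in_l2 (sumsq_fin _ _ _ hs) ltry. Qed.

Lemma nrm2_fin x lo n : supp x lo n -> nrm2 x = fs (sqf x) lo n.
Proof. by move=> hs; rewrite /nrm2 (sumsq_fin _ _ _ hs). Qed.

Lemma fs_le_nrm2 x lo n : in_l2 x -> fs (sqf x) lo n <= nrm2 x.
Proof. by move=> hx; rewrite -lee_fin -l2E //; apply: fin_le_esum => i; exact: csq_ge0. Qed.

Lemma cnt_nat (t0 p : int) (Tn d : nat) :
  (\sum_(k < Tn) (inwin (t0 + k%:Z) d p : nat))%N =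
  if p < t0 then 0%N else (minn Tn `|p - t0|.+1 - minn Tn (`|p - t0|.+1 - d))%N.
Proof.
elim: Tn => [|Tn IH]; first by rewrite big_ord0; case: ifP.
rewrite big_ord_recr /= IH /inwin.
case: (boolP ((t0 + Tn%:Z <= p) && (p < t0 + Tn%:Z + d%:Z))) => h.
  move/andP: h => [h1 h2]; case: ifP => h3; lia.
case: ifP => h3 //=; rewrite addn0.
move/negP: h => h; apply/eqP; rewrite eqn_leq; apply/andP; split; lia.
Qed.

Lemma cnt_le (t0 p : int) (Tn d : nat) :
  \sum_(k < Tn) ((inwin (t0 + k%:Z) d p)%:R : R) <= d%:R.
Proof.
have -> : \sum_(k < Tn) ((inwin (t0 + k%:Z) d p)%:R : R) =
   (\sum_(k < Tn) (inwin (t0 + k%:Z) d p : nat))%N%:R by rewrite natr_sum.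
rewrite ler_nat cnt_nat; case: ifP => _; lia.
Qed.

Lemma cnt_eq (t0 p : int) (Tn d : nat) : t0 + d%:Z - 1 <= p -> p < t0 + Tn%:Z ->
  \sum_(k < Tn) ((inwin (t0 + k%:Z) d p)%:R : R) = d%:R.
Proof.
move=> h1 h2.
have -> : \sum_(k < Tn) ((inwin (t0 + k%:Z) d p)%:R : R) =
   (\sum_(k < Tn) (inwin (t0 + k%:Z) d p : nat))%N%:R by rewrite natr_sum.
congr (_%:R); rewrite cnt_nat; case: ifP => h3; first lia.
apply/eqP; rewrite eqn_leq; apply/andP; split; lia.
Qed.

Section Band.
Variable w : nat.
Variable a : int -> int -> R[i].
Variable K : R.
Hypothesis hK : forall i j, csq (a i j) <= K.

Lemma K_ge0 : 0 <= K.
Proof. exact: le_trans (csq_ge0 (a 0 0)) (hK 0 0). Qed.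

Definition nb (x : int -> R[i]) (i : int) : R := \sum_(k < (2 * w).+1) sqf x (i - w%:Z + k%:Z).

Lemma nb_ge0 x i : 0 <= nb x i.
Proof. by apply: sumr_ge0 => k _; exact: csq_ge0. Qed.

Lemma ba_bound x i : csq (band_apply w a x i) <= (2 * w).+1%:R * K * nb x i.
Proof.
rewrite /band_apply -mulrA; apply: (le_trans (csq_sum _ _)); apply: ler_wpM2l => //.
rewrite /nb mulr_sumr; apply: ler_sum => k _; rewrite csqM; apply: ler_wpM2r => //.
exact: csq_ge0.
Qed.

Lemma fs_nb x lo n : in_l2 x -> fs (nb x) lo n <= (2 * w).+1%:R * nrm2 x.
Proof.
move=> hx; rewrite /fs /nb exchange_big /=.
have hb : forall k : 'I_(2 * w).+1,
   \sum_(j < n) sqf x (lo + j%:Z - w%:Z + k%:Z) <= nrm2 x.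
  move=> k; have := fs_le_nrm2 _ (lo - w%:Z + k%:Z) n hx; apply: le_trans.
  rewrite /fs; apply/eqle/eq_bigr => j _; congr sqf; ring.
apply: le_trans (ler_sum _ (fun k _ => hb k)) _.
by rewrite sumr_const card_ord mulr_natl.
Qed.

Lemma ba_l2 x : in_l2 x -> in_l2 (band_apply w a x) /\
  nrm2 (band_apply w a x) <= (2 * w).+1%:R ^+ 2 * K * nrm2 x.
Proof.
move=> hx.
have h : (sumsq (band_apply w a x) <= ((2 * w).+1%:R ^+ 2 * K * nrm2 x)%:E)%E.
  apply: esum_le_win => [i|lo n]; first exact: csq_ge0.
  apply: (@le_trans _ _ (fs (fun i => (2 * w).+1%:R * K * nb x i) lo n)).
    by apply: ler_sum => k _; exact: ba_bound.
  have C0 : 0 <= (2 * w).+1%:R * K by rewrite mulr_ge0 // K_ge0.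
  rewrite /fs -mulr_sumr; apply: le_trans (ler_wpM2l C0 (fs_nb _ lo n hx)) _.
  by apply: eqle; rewrite expr2; ring.
have hl : in_l2 (band_apply w a x) by rewrite /in_l2; apply: le_lt_trans h _; rewrite ltry.
by split => //; rewrite -lee_fin -l2E.
Qed.

Lemma ba_supp x lo n : supp x lo n -> supp (band_apply w a x) (lo - w%:Z) (n + 2 * w).
Proof.
move=> hs i hi; rewrite /band_apply big1 // => k _; rewrite hs ?mulr0 //.
move: hi; rewrite /inwin; have := ltn_ord k; move: (nat_of_ord k) => kk hk.
case: (boolP (lo - w%:Z <= i)) => /= h1 h2; apply/negP => /andP[h3 h4]; lia.
Qed.

Definition chiv t N x : int -> R[i] := fun j => (inwin t N j)%:R * x j.

Lemma csq_bdiff (b1 b2 : bool) : csq ((b1%:R : R[i]) - b2%:R) = (b1 != b2)%:R.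
Proof. by case: b1; case: b2; rewrite /csq /=; rewrite ?subrr ?sub0r ?subr0 /=; ring. Qed.

Lemma pw (d : R) t N x i : 0 < d ->
  csq (band_apply w a (chiv t N x) i) <=
  (1 + d) * ((inwin t N i)%:R * csq (band_apply w a x i)) +
  (1 + d^-1) * ((2 * w).+1%:R * K * (((inwin t (2 * w).+1 (i + w%:Z))%:R +
       (inwin (t + N%:Z) (2 * w).+1 (i + w%:Z))%:R) * nb x i)).
Proof.
move=> d0.
have dec : band_apply w a (chiv t N x) i = (inwin t N i)%:R * band_apply w a x i +
  \sum_(k < (2 * w).+1) a i (i - w%:Z + k%:Z) *
     ((inwin t N (i - w%:Z + k%:Z))%:R - (inwin t N i)%:R) * x (i - w%:Z + k%:Z).
  rewrite /band_apply mulr_sumr -big_split; apply: eq_bigr => k _; rewrite /chiv /=; ring.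
rewrite dec; apply: le_trans (csqD_le _ _ _ d0) _; apply: lerD.
  by apply: ler_wpM2l; [rewrite addr_ge0 // ltW | rewrite csqM csq_bool].
apply: ler_wpM2l; first by rewrite addr_ge0 // invr_ge0 ltW.
apply: le_trans (csq_sum _ _) _; rewrite -mulrA; apply: ler_wpM2l => //.
rewrite /nb !mulr_sumr; apply: ler_sum => k _; rewrite !csqM csq_bdiff.
rewrite /sqf mulrA; apply: ler_wpM2r; first exact: csq_ge0.
apply: ler_pM => //; first exact: csq_ge0.
case: (boolP (inwin t N (i - w%:Z + k%:Z) != inwin t N i)) => h /=; last first.
  by rewrite addr_ge0.
have := chi_diff t i N w k (ltn_ord k) h.
by case: (inwin t _ _); case: (inwin (t + _) _ _) => //= _; rewrite ?ler_addl ?lerDl ?lerDr.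
Qed.

Lemma sqf_chiv t N x j : sqf (chiv t N x) j = (inwin t N j)%:R * sqf x j.
Proof. by rewrite /sqf /chiv csqM csq_bool. Qed.

Lemma loc_sumT (d : R) x lo n (N : nat) : 0 < d -> supp x lo n ->
  \sum_(k < (n + 2 * w + N)%N) fs (sqf (band_apply w a (chiv (lo - w%:Z - N%:Z + k%:Z) N x))) (lo - w%:Z) (n + 2 * w)
  <= (1 + d) * N%:R * fs (sqf (band_apply w a x)) (lo - w%:Z) (n + 2 * w) +
     (1 + d^-1) * ((2 * w).+1%:R * K * (2 * (2 * w).+1)%:R) *
         ((2 * w).+1%:R * fs (sqf x) lo n).
Proof.
move=> d0 hs; set t0 := lo - w%:Z - N%:Z; set Tn := (n + 2 * w + N)%N.
have hx := in_l2_fin _ _ _ hs.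
pose C := (2 * w).+1%:R * K.
have C0 : 0 <= C by rewrite mulr_ge0 // K_ge0.
have d1 : 0 <= 1 + d by rewrite addr_ge0 // ltW.
have d2 : 0 <= 1 + d^-1 by rewrite addr_ge0 // invr_ge0 ltW.
apply: (@le_trans _ _ (\sum_(k < Tn) \sum_(i < n + 2 * w)
   ((1 + d) * ((inwin (t0 + k%:Z) N (lo - w%:Z + i%:Z))%:R * sqf (band_apply w a x) (lo - w%:Z + i%:Z)) +
    (1 + d^-1) * (C * (((inwin (t0 + k%:Z) (2 * w).+1 (lo - w%:Z + i%:Z + w%:Z))%:R +
       (inwin (t0 + k%:Z + N%:Z) (2 * w).+1 (lo - w%:Z + i%:Z + w%:Z))%:R) * nb x (lo - w%:Z + i%:Z)))))).
  by apply: ler_sum => k _; apply: ler_sum => i _; exact: pw.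
rewrite exchange_big /=.
apply: (@le_trans _ _ (\sum_(i < n + 2 * w)
   ((1 + d) * N%:R * sqf (band_apply w a x) (lo - w%:Z + i%:Z) +
    (1 + d^-1) * (C * (2 * (2 * w).+1)%:R) * nb x (lo - w%:Z + i%:Z)))).
  apply: ler_sum => i _; rewrite big_split /=; apply: lerD.
    rewrite -mulr_sumr -mulrA; apply: ler_wpM2l => //.
    rewrite -mulr_suml; apply: ler_wpM2r; first exact: csq_ge0.
    exact: cnt_le.
  rewrite -mulr_sumr -!mulrA; apply: ler_wpM2l => //.
  rewrite -mulr_sumr [X in _ <= X]mulrA -/C; apply: ler_wpM2l => //.
  rewrite -mulr_suml; apply: ler_wpM2r; first exact: nb_ge0.
  rewrite big_split /= natrM mulr2n mulrDl mul1r; apply: lerD; first exact: cnt_le.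
  under eq_bigr => k _ do rewrite [t0 + _ + _]addrAC.
  exact: cnt_le.
rewrite big_split /= -!mulr_sumr; apply: lerD; first by [].
apply: ler_wpM2l; first by apply: mulr_ge0 => //; apply: mulr_ge0 => //; rewrite mulr_ge0 // K_ge0.
by rewrite -(nrm2_fin _ _ _ hs); exact: fs_nb.
Qed.

Lemma loc_sumS x lo n (N : nat) : supp x lo n ->
  \sum_(k < (n + 2 * w + N)%N) fs (sqf (chiv (lo - w%:Z - N%:Z + k%:Z) N x)) lo n
  = N%:R * fs (sqf x) lo n.
Proof.
move=> hs; rewrite /fs exchange_big /= mulr_sumr; apply: eq_bigr => i _.
under eq_bigr do rewrite sqf_chiv.
rewrite -mulr_suml cnt_eq // ?mulrC //; have := ltn_ord i; lia.
Qed.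

Definition Dc := (2 * w).+1%:R * K * (2 * (2 * w).+1)%:R * (2 * w).+1%:R.

Lemma loc (d : R) x lo n (N : nat) : 0 < d -> (0 < N)%N -> supp x lo n ->
  0 < fs (sqf x) lo n ->
  exists t : int, 0 < fs (sqf (chiv t N x)) lo n /\
   fs (sqf (band_apply w a (chiv t N x))) (lo - w%:Z) (n + 2 * w) <=
   ((1 + d) * fs (sqf (band_apply w a x)) (lo - w%:Z) (n + 2 * w) / fs (sqf x) lo n
     + (1 + d^-1) * Dc / N%:R) * fs (sqf (chiv t N x)) lo n.
Proof.
move=> d0 N0 hs S0.
set T := fs (sqf (band_apply w a x)) (lo - w%:Z) (n + 2 * w).
set S := fs (sqf x) lo n.
set c := (1 + d) * T / S + (1 + d^-1) * Dc / N%:R.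
have Nr : (0 : R) < N%:R by rewrite ltr0n.
have key : c * (N%:R * S) = (1 + d) * N%:R * T + (1 + d^-1) * ((2 * w).+1%:R * K * (2 * (2 * w).+1)%:R) *
         ((2 * w).+1%:R * S).
  rewrite /c /Dc; field; rewrite !gt_eqF //.
have hT := loc_sumT d x lo n N d0 hs; rewrite -/T -/S -key in hT.
have hS := loc_sumS x lo n N hs; rewrite -/S in hS.
set Sy := fun k : 'I_(n + 2 * w + N) => fs (sqf (chiv (lo - w%:Z - N%:Z + k%:Z) N x)) lo n.
set Ty := fun k : 'I_(n + 2 * w + N) =>
  fs (sqf (band_apply w a (chiv (lo - w%:Z - N%:Z + k%:Z) N x))) (lo - w%:Z) (n + 2 * w).
case: (pselect (exists k, 0 < Sy k /\ Ty k <= c * Sy k)) => [[k hk]|hno].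
  by exists (lo - w%:Z - N%:Z + k%:Z).
exfalso.
have Sy0 : forall k, 0 <= Sy k by move=> k; apply: fs_ge0 => i; exact: csq_ge0.
have hk : forall k, 0 <= Ty k - c * Sy k.
  move=> k; rewrite subr_ge0; case: (ltrP 0 (Sy k)) => h.
    by rewrite leNgt; apply/negP => /ltW h'; apply: hno; exists k.
  have -> : Sy k = 0 by apply/eqP; rewrite eq_le h Sy0.
  by rewrite mulr0; apply: fs_ge0 => i; exact: csq_ge0.
have hsum : \sum_(k < (n + 2 * w + N)%N) (Ty k - c * Sy k) = 0.
  apply/eqP; rewrite eq_le sumr_ge0 // andbT.
  by rewrite sumrB -mulr_sumr subr_le0 hS.
have hall := psumr_eq0P (fun k _ => hk k) hsum.
have : exists k, 0 < Sy k.
  apply: contra_notP hno => /forallNP hn; exfalso.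
  have : \sum_(k < (n + 2 * w + N)%N) Sy k <= 0.
    by apply: sumr_le0 => k _; rewrite leNgt; apply/negP => /hn.
  by rewrite hS leNgt mulr_gt0.
move=> [k hk']; apply: hno; exists k; split => //.
by move/eqP: (hall k isT); rewrite subr_eq0 => /eqP ->.
Qed.

End Band.

Lemma l2norm_ge0 x : 0 <= l2norm x.
Proof. exact: sqrtr_ge0. Qed.

Definition unitset : set (int -> R[i]) := [set x | in_l2 x /\ l2norm x = 1].

Lemma lower_norm_lb w a : has_lbound [set l2norm (band_apply w a x) | x in unitset].
Proof. by exists 0 => _ [x _ <-]; exact: l2norm_ge0. Qed.

Definition e0 (j : int) : int -> R[i] := fun l => (l == j)%:R.

Lemma e0_supp j : supp (e0 j) j 1.
Proof.
move=> i hi; rewrite /e0; case: eqP => // eij; move: hi; rewrite eij /inwin.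
by rewrite lexx /= ltrDl ltr01.
Qed.

Lemma e0_nrm2 j : nrm2 (e0 j) = 1.
Proof.
rewrite (nrm2_fin _ _ _ (e0_supp j)) /fs big_ord1 addr0 /sqf /e0 eqxx.
by rewrite (csq_bool true).
Qed.

Lemma e0_unit j : unitset (e0 j).
Proof.
split; first exact: in_l2_fin (e0_supp j).
by rewrite /l2norm -/(nrm2 _) e0_nrm2 sqrtr1.
Qed.

Lemma lower_norm_ne w a : nonempty [set l2norm (band_apply w a x) | x in unitset].
Proof. by exists (l2norm (band_apply w a (e0 0))); exists (e0 0) => //; exact: e0_unit. Qed.

Lemma lower_norm_le w a x : unitset x -> lower_norm w a <= l2norm (band_apply w a x).
Proof. by move=> hx; apply: ge_inf; [exact: lower_norm_lb | exists x]. Qed.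

Lemma lower_norm_adh w a (e : R) : 0 < e -> exists x, unitset x /\
  l2norm (band_apply w a x) < lower_norm w a + e.
Proof.
move=> e0p; have [_ [x hx <-] h] := inf_adherent e0p (conj (lower_norm_ne w a) (lower_norm_lb w a)).
by exists x.
Qed.

Lemma ba_scale w a (s : R) x i :
  band_apply w a (fun j => (s%:C)%C * x j) i = (s%:C)%C * band_apply w a x i.
Proof. by rewrite /band_apply mulr_sumr; apply: eq_bigr => k _; rewrite mulrCA. Qed.

Lemma ub_lemma w a y lo n (c : R) : supp y lo n -> 0 < fs (sqf y) lo n -> 0 <= c ->
  fs (sqf (band_apply w a y)) (lo - w%:Z) (n + 2 * w) <= c * fs (sqf y) lo n ->
  lower_norm w a <= Num.sqrt c.
Proof.
move=> hs S0 c0 hT.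
set S := fs (sqf y) lo n in S0 hT.
set s := (Num.sqrt S)^-1.
have sS : s ^+ 2 * S = 1.
  by rewrite /s exprVn sqr_sqrtr ?mulVf ?gt_eqF // ltW.
set x := fun j => (s%:C)%C * y j.
have hsx : supp x lo n by move=> i hi; rewrite /x hs ?mulr0.
have nx : nrm2 x = 1.
  rewrite (nrm2_fin _ _ _ hsx) -sS /fs mulr_sumr; apply: eq_bigr => k _.
  by rewrite /sqf /x csq_real.
have ux : unitset x.
  by split; [exact: in_l2_fin hsx | rewrite /l2norm -/(nrm2 _) nx sqrtr1].
apply: (le_trans (lower_norm_le w a x ux)).
rewrite /l2norm -/(nrm2 _) ler_sqrt //.
have hsb := ba_supp w a x lo n hsx.
rewrite (nrm2_fin _ _ _ hsb).
have -> : fs (sqf (band_apply w a x)) (lo - w%:Z) (n + 2 * w) =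
   s ^+ 2 * fs (sqf (band_apply w a y)) (lo - w%:Z) (n + 2 * w).
  rewrite /fs mulr_sumr; apply: eq_bigr => k _; rewrite /sqf /x ba_scale csq_real //.
have -> : c = s ^+ 2 * (S * c) by rewrite mulrA sS mul1r.
by apply: ler_wpM2l; [exact: sqr_ge0 | rewrite mulrC].
Qed.

Lemma transfer w (N : nat) b1 b2 (k k' : int) y :
  colsubmx w N b1 k = colsubmx w N b2 k' -> supp y (k + 1) N ->
  exists y', [/\ supp y' (k' + 1) N, fs (sqf y') (k' + 1) N = fs (sqf y) (k + 1) N &
    fs (sqf (band_apply w b2 y')) (k' + 1 - w%:Z) (N + 2 * w) =
    fs (sqf (band_apply w b1 y)) (k + 1 - w%:Z) (N + 2 * w)].
Proof.
move=> heq hs.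
exists (fun j => y (j - k' + k)); split.
- move=> i hi; apply: hs; move: hi; rewrite /inwin; apply: contra => /andP[h1 h2].
  apply/andP; split; lia.
- by apply: eq_bigr => j _; rewrite /sqf /=; congr (csq (y _)); ring.
apply: eq_bigr => r _; congr csq; rewrite /band_apply; apply: eq_bigr => kk _.
have -> : k' + 1 - w%:Z + r%:Z - w%:Z + kk%:Z - k' + k = k + 1 - w%:Z + r%:Z - w%:Z + kk%:Z by ring.
set j := k + 1 - w%:Z + r%:Z - w%:Z + kk%:Z.
case: (boolP (inwin (k + 1) N j)) => hj; last by rewrite hs // !mulr0.
congr (_ * _).
have hr : (r < N + 2 * w)%N := ltn_ord r.
have hc : (`|(j - (k + 1))%R| < N)%N by move: hj; rewrite /inwin => /andP[h1 h2]; lia.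
have := congr1 (fun M : 'M[R[i]]_(N + 2 * w, N) => M (Ordinal hr) (Ordinal hc)) heq.
rewrite /= !mxE.
have e1 : forall kk0 : int, kk0 + ((Ordinal hr : nat)%:Z + 1 - w%:Z) = kk0 + 1 - w%:Z + r%:Z.
  by move=> kk0 /=; ring.
have e2 : forall kk0 : int, kk0 + ((Ordinal hc : nat)%:Z + 1) = kk0 + (j - k).
  by move=> kk0 /=; move: hj; rewrite /inwin => /andP[h1 h2]; lia.
rewrite !e1 !e2 (_ : k + (j - k) = j); last by ring.
move=> ->; congr (b2 _ _); rewrite /j; ring.
Qed.

Lemma nrm2_l2norm x : nrm2 x = l2norm x ^+ 2.
Proof. by rewrite /l2norm sqr_sqrtr // nrm2_ge0. Qed.

Lemma entry_bound w a (M : R) : bandwidth_le a w -> op_norm_le w a M ->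
  forall i j, csq (a i j) <= M ^+ 2.
Proof.
move=> hb hop i j.
case: (ltnP w `|i - j|) => hij; first by rewrite hb // csq0 sqr_ge0.
have [hl hn] := hop (e0 j) (in_l2_fin _ _ _ (e0_supp j)).
have n1 : l2norm (e0 j) = 1 by case: (e0_unit j).
rewrite n1 mulr1 in hn.
have hk0 : (`|(j - i + w%:Z)%R|%N < (2 * w).+1)%N by lia.
have hv : band_apply w a (e0 j) i = a i j.
  rewrite /band_apply (bigD1 (Ordinal hk0)) //= big1 => [|kk hkk].
    have -> : i - w%:Z + (`|(j - i + w%:Z)%R|%N)%:Z = j by lia.
    by rewrite /e0 eqxx mulr1 addr0.
  rewrite /e0; case: eqP => [h|]; last by rewrite mulr0.
  exfalso; move/eqP: hkk; apply; apply/val_inj => /=; lia.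
have h1 : csq (a i j) <= nrm2 (band_apply w a (e0 j)).
  have := fs_le_nrm2 _ i 1 hl; rewrite /fs big_ord1 addr0 /sqf hv; exact.
apply: le_trans h1 _; rewrite nrm2_l2norm !expr2.
by apply: ler_pM => //; exact: l2norm_ge0.
Qed.

Lemma ms_entry a (K : R) (lam : R[i]) : (forall i j, csq (a i j) <= K) ->
  forall i j, csq (minus_scalar a lam i j) <= 2 * K + 2 * csq lam.
Proof.
move=> hK i j; rewrite /minus_scalar.
have h := csqD_le 1 (a i j) (- (if i == j then lam else 0)) ltr01.
rewrite invr1 csqN in h; apply: le_trans h _.
have -> : (2 : R) = 1 + 1 by [].
have h2 : (0 : R) <= 1 + 1 by [].
apply: lerD; apply: ler_wpM2l => //; case: eqP => _ //; rewrite csq0; exact: csq_ge0.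
Qed.

Lemma ms_colsub w N a b (k k' : int) (lam : R[i]) :
  colsubmx w N a k = colsubmx w N b k' ->
  colsubmx w N (minus_scalar a lam) k = colsubmx w N (minus_scalar b lam) k'.
Proof.
move=> h; apply/matrixP => r c; have := congr1 (fun M : 'M[R[i]]_(N + 2 * w, N) => M r c) h; rewrite /= !mxE /minus_scalar => ->.
by congr (_ - _); rewrite !(inj_eq (addrI _)).
Qed.

Lemma fset_le_win (f : int -> R) lo n (F : set int) : (forall i, 0 <= f i) ->
  finite_set F -> (forall i, F i -> inwin lo n i) ->
  (\sum_(i \in F) (f i)%:E <= (fs f lo n)%:E)%E.
Proof.
move=> f0 finF hM.
rewrite -esum_fset //; last by move=> i _; rewrite lee_fin.
rewrite esum_mkcond; apply: (@le_trans _ _ (\esum_(i in [set: int]) (restr f lo n i)%:E)%E).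
  apply: le_esum => i _; case: ifPn => [iF|_]; last by rewrite lee_fin /restr; case: ifP.
  by rewrite /restr hM //; rewrite inE in iF.
have g0 : forall i, 0 <= restr f lo n i by move=> i; rewrite /restr; case: ifP.
by rewrite (esum_fin _ _ _ g0 (fun i (h : ~~ inwin _ _ i) => ifN _ _ h)) fs_restr.
Qed.

Definition tailf (M : nat) x : int -> R :=
  fun j => if inwin (- M%:Z) (2 * M).+1 j then 0 else sqf x j.

Lemma tailf_ge0 M x j : 0 <= tailf M x j.
Proof. by rewrite /tailf; case: ifP => _ //; exact: csq_ge0. Qed.

Lemma tail_lemma x (eta : R) : in_l2 x -> 0 < eta ->
  exists M : nat, nrm2 x - eta < fs (sqf x) (- M%:Z) (2 * M).+1 /\
    forall lo n, fs (tailf M x) lo n <= eta.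
Proof.
move=> hx e0.
have h : ((nrm2 x - eta)%:E < sumsq x)%E by rewrite l2E // lte_fin ltrBlDr ltrDl.
rewrite /sumsq /esum in h.
have [_ [F [finF _] <-] hF] := ereal_sup_gt h.
have [M hM] := finite_win _ finF.
exists M.
have h1 : nrm2 x - eta < fs (sqf x) (- M%:Z) (2 * M).+1.
  by rewrite -lte_fin; apply: lt_le_trans hF _; apply: fset_le_win => // i; exact: csq_ge0.
split => // lo n.
have ht : ((fs (tailf M x) lo n)%:E <= \esum_(i in [set: int]) (tailf M x i)%:E)%E.
  by apply: fin_le_esum => j; exact: tailf_ge0.
rewrite -lee_fin; apply: le_trans ht _.
have hsplit : sumsq x = ((fs (sqf x) (- M%:Z) (2 * M).+1)%:E +
     \esum_(i in [set: int]) (tailf M x i)%:E)%E.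
  have r0 : forall i, 0 <= restr (sqf x) (- M%:Z) (2 * M).+1 i.
    by move=> i; rewrite /restr; case: ifP => // _; exact: csq_ge0.
  rewrite -fs_restr -(esum_fin _ _ _ r0 (fun i (h : ~~ inwin _ _ i) => ifN _ _ h)).
  rewrite -esumD; last by move=> i _; rewrite lee_fin tailf_ge0.
    by apply: eq_esum => i _; rewrite /restr /tailf -EFinD; case: ifP; rewrite ?addr0 ?add0r.
  by move=> i _; rewrite lee_fin.
rewrite leNgt; apply/negP => hlt.
have : ((fs (sqf x) (- M%:Z) (2 * M).+1)%:E + eta%:E <
        (fs (sqf x) (- M%:Z) (2 * M).+1)%:E + \esum_(i in [set: int]) (tailf M x i)%:E)%E.
  by rewrite lteD2lE.
rewrite -hsplit l2E // -EFinD lte_fin; move: h1; lra.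
Qed.

Section Den.
Variable w : nat.
Variable a : int -> int -> R[i].
Variable K : R.
Hypothesis hK : forall i j, csq (a i j) <= K.

Lemma tail_pt (M : nat) x (i : int) (kk : nat) : (kk <= 2 * w)%N ->
  ((inwin (- (M + 2 * w + 1)%N%:Z) (2 * w).+1 (i + w%:Z))%:R +
   (inwin (- (M + 2 * w + 1)%N%:Z + (2 * (M + 2 * w + 1)).+1%:Z) (2 * w).+1 (i + w%:Z))%:R) * sqf x (i - w%:Z + kk%:Z)
  <= 2 * tailf M x (i - w%:Z + kk%:Z).
Proof.
move=> hk; set m := (M + 2 * w + 1)%N.
set b1 := inwin (- (M + 2 * w + 1)%N%:Z) (2 * w).+1 (i + w%:Z).
set b2 := inwin (- (M + 2 * w + 1)%N%:Z + (2 * (M + 2 * w + 1)).+1%:Z) (2 * w).+1 (i + w%:Z).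
have hout : b1 || b2 -> ~~ inwin (- M%:Z) (2 * M).+1 (i - w%:Z + kk%:Z).
  rewrite /b1 /b2 /inwin /m => /orP[] /andP[h1 h2]; apply/negP => /andP[h3 h4]; lia.
case: (boolP (b1 || b2)) => hb.
  rewrite /tailf ifN; last exact: hout.
  apply: ler_wpM2r; first exact: csq_ge0.
  by case: (b1); case: (b2) => //=; rewrite ?add0r ?addr0 ?ler1n.
rewrite negb_or in hb; case/andP: hb => /negbTE -> /negbTE ->.
by rewrite add0r mul0r mulr_ge0 // tailf_ge0.
Qed.

Lemma den x (eps : R) : unitset x -> 0 < eps ->
  exists y lo n, [/\ supp y lo n, 0 < fs (sqf y) lo n &
    fs (sqf (band_apply w a y)) (lo - w%:Z) (n + 2 * w) <=
      (nrm2 (band_apply w a x) + eps) * fs (sqf y) lo n].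
Proof.
move=> [hx n1] e0.
have nx : nrm2 x = 1 by rewrite nrm2_l2norm n1 expr1n.
have K0 : 0 <= K := K_ge0 a K hK.
have [hbl hrho] := ba_l2 w a K hK x hx; rewrite nx mulr1 in hrho.
set rho := nrm2 (band_apply w a x) in hrho *.
have rho0 : 0 <= rho := nrm2_ge0 _.
set P := (2 * w).+1%:R ^+ 2 * K in hrho.
have P0 : 0 <= P by rewrite mulr_ge0 // sqr_ge0.
set C := (2 * w).+1%:R * K.
have C0 : 0 <= C by rewrite mulr_ge0.
set d := eps / (4 * (P + 1)).
have d0 : 0 < d by rewrite divr_gt0 // mulr_gt0 // ltr_wpDl.
set E := (1 + d^-1) * C * (2 * (2 * w).+1)%:R.
have E0 : 0 <= E by rewrite !mulr_ge0 // addr_ge0 // invr_ge0 ltW.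
set eta := eps / (4 * (E + P + eps + 1)).
have eta0 : 0 < eta by rewrite divr_gt0 // mulr_gt0 // ltr_wpDl // !addr_ge0 // ltW.
have [M [hM1 hM2]] := tail_lemma x eta hx eta0.
set m := (M + 2 * w + 1)%N.
exists (chiv (- m%:Z) (2 * m).+1 x), (- m%:Z), (2 * m).+1.
have hsy : supp (chiv (- m%:Z) (2 * m).+1 x) (- m%:Z) (2 * m).+1.
  by move=> i hi; rewrite /chiv (negbTE hi) mul0r.
have Sy : fs (sqf (chiv (- m%:Z) (2 * m).+1 x)) (- m%:Z) (2 * m).+1 = fs (sqf x) (- m%:Z) (2 * m).+1.
  by apply: eq_bigr => k _; rewrite sqf_chiv inwin_k mul1r.
have Sy1 : 1 - eta < fs (sqf x) (- m%:Z) (2 * m).+1.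
  rewrite -nx; apply: lt_le_trans hM1 _; apply: fs_mono_win => [i|i]; first exact: csq_ge0.
  by rewrite /inwin /m => /andP[h1 h2] _; apply/andP; split; lia.
have Sy2 : fs (sqf x) (- m%:Z) (2 * m).+1 <= 1 by rewrite -nx; exact: fs_le_nrm2.
have eta1 : eta < 1.
  rewrite /eta ltr_pdivrMr ?mulr_gt0 ?ltr_wpDl // ?addr_ge0 // ?ltW //; nra.
rewrite Sy; split => //; first by apply: lt_trans Sy1; rewrite subr_gt0.
have hT : fs (sqf (band_apply w a (chiv (- m%:Z) (2 * m).+1 x))) (- m%:Z - w%:Z) ((2 * m).+1 + 2 * w)
   <= (1 + d) * rho + E * eta.
  apply: (@le_trans _ _ (\sum_(i < ((2 * m).+1 + 2 * w)%N)
     ((1 + d) * ((inwin (- m%:Z) (2 * m).+1 (- m%:Z - w%:Z + i%:Z))%:R *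
        sqf (band_apply w a x) (- m%:Z - w%:Z + i%:Z)) +
      (1 + d^-1) * (C * (((inwin (- m%:Z) (2 * w).+1 (- m%:Z - w%:Z + i%:Z + w%:Z))%:R +
       (inwin (- m%:Z + (2 * m).+1%:Z) (2 * w).+1 (- m%:Z - w%:Z + i%:Z + w%:Z))%:R) *
         nb w x (- m%:Z - w%:Z + i%:Z)))))).
    by apply: ler_sum => i _; apply: (pw w a K hK).
  rewrite big_split /=; apply: lerD.
    rewrite -mulr_sumr; apply: ler_wpM2l; first by rewrite addr_ge0 // ltW.
    apply: le_trans (fs_le_nrm2 _ (- m%:Z - w%:Z) ((2 * m).+1 + 2 * w) hbl).
    apply: ler_sum => i _; case: (inwin _ _ _); rewrite ?mul1r ?mul0r //; exact: csq_ge0.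
  rewrite -mulr_sumr /E -!mulrA; apply: ler_wpM2l; first by rewrite addr_ge0 // invr_ge0 ltW.
  rewrite -mulr_sumr [X in _ <= X]mulrA -/C; apply: ler_wpM2l => //.
  apply: (@le_trans _ _ (\sum_(i < ((2 * m).+1 + 2 * w)%N) \sum_(kk < (2 * w).+1)
      2 * tailf M x (- m%:Z - w%:Z + i%:Z - w%:Z + kk%:Z))).
    apply: ler_sum => i _; rewrite /nb mulr_sumr; apply: ler_sum => kk _.
    exact: (tail_pt M x _ kk (ltn_ord kk)).
  rewrite exchange_big /=.
  under eq_bigr do rewrite -mulr_sumr.
  rewrite -mulr_sumr natrM -mulrA; apply: ler_wpM2l => //.
  have hb : forall kk : 'I_(2 * w).+1,
      \sum_(i < ((2 * m).+1 + 2 * w)%N) tailf M x (- m%:Z - w%:Z + i%:Z - w%:Z + kk%:Z) <= eta.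
    move=> kk; have := hM2 (- m%:Z - w%:Z - w%:Z + kk%:Z) ((2 * m).+1 + 2 * w); apply: le_trans.
    by apply: eqle; apply: eq_bigr => i _; congr tailf; ring.
  apply: le_trans (ler_sum _ (fun kk _ => hb kk)) _.
  by rewrite sumr_const card_ord mulr_natl.
apply: le_trans hT _.
apply: (@le_trans _ _ ((rho + eps) * (1 - eta))); last first.
  by apply: ler_wpM2l; [rewrite addr_ge0 // ltW | exact: ltW].
have h1 : d * rho <= eps / 4.
  rewrite /d; apply: (@le_trans _ _ (eps / (4 * (P + 1)) * (P + 1))).
    by apply: ler_wpM2l; [exact: ltW | lra].
  by apply: eqle; field; rewrite gt_eqF // ltr_wpDl.
have h2 : eta * (E + rho + eps) <= eps / 4.
  rewrite /eta; apply: (@le_trans _ _ (eps / (4 * (E + P + eps + 1)) * (E + P + eps + 1))).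
    by apply: ler_wpM2l; [rewrite ltW | lra].
  by apply: eqle; field; rewrite gt_eqF // ltr_wpDl // !addr_ge0 // ltW.
nra.
Qed.

End Den.

Lemma supp_sqf y lo n : supp y lo n -> forall i, ~~ inwin lo n i -> sqf y i = 0.
Proof. by move=> hs i hi; rewrite /sqf hs // csq0. Qed.

Lemma compare w (K e : R) : 0 <= K -> 0 < e -> exists N : nat, (0 < N)%N /\
  forall b1 b2 : int -> int -> R[i],
  (forall i j, csq (b1 i j) <= K) -> (forall i j, csq (b2 i j) <= K) ->
  (forall k, exists k', colsubmx w N b1 k = colsubmx w N b2 k') ->
  lower_norm w b2 <= lower_norm w b1 + e.
Proof.
move=> K0 e0.
set P := (2 * w).+1%:R ^+ 2 * K.
have P0 : 0 <= P by rewrite mulr_ge0 // sqr_ge0.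
set e1 := e ^+ 2 / 12.
have e10 : 0 < e1 by rewrite divr_gt0 // exprn_gt0.
set d := e1 / (P + e1 + 1).
have d0 : 0 < d by rewrite divr_gt0 // ltr_wpDl // addr_ge0 // ltW.
have D0 : 0 <= Dc w K by rewrite /Dc !mulr_ge0.
set X := (1 + d^-1) * Dc w K / e1.
exists (Num.truncn X).+1; split => //.
move=> b1 b2 h1 h2 hcol.
set N := (Num.truncn X).+1.
have Npos : (0 : R) < N%:R by rewrite ltr0n.
have hN : (1 + d^-1) * Dc w K / N%:R <= e1.
  have hX := truncnS_gt X; rewrite -/N /X ltr_pdivrMr // in hX.
  by rewrite ler_pdivrMr // [e1 * _]mulrC; apply: ltW.
have e20 : 0 < e / 2 by rewrite divr_gt0.
have [x [ux hxl]] := lower_norm_adh w b1 (e / 2) e20.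
have nx : nrm2 x = 1 by rewrite nrm2_l2norm (proj2 ux) expr1n.
have [hbl hrho] := ba_l2 w b1 K h1 x (proj1 ux); rewrite nx mulr1 -/P in hrho.
set rho := nrm2 (band_apply w b1 x) in hrho.
have rho0 : 0 <= rho := nrm2_ge0 _.
have [y [lo [n [hsy Sy0 hTy]]]] := den w b1 K h1 x e1 ux e10.
have [t [Sz0 hTz]] := loc w b1 K h1 d y lo n N d0 (isT : (0 < N)%N) hsy Sy0.
set z := chiv t N y in Sz0 hTz.
have hsz1 : supp z t N by move=> i hi; rewrite /z /chiv (negbTE hi) mul0r.
have hsz2 : supp z lo n by move=> i hi; rewrite /z /chiv hsy // mulr0.
have eS : fs (sqf z) lo n = fs (sqf z) t N.
  apply: fs_win_eq; [exact: sqf_ge0 | exact: supp_sqf hsz2 | exact: supp_sqf hsz1].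
have eT : fs (sqf (band_apply w b1 z)) (lo - w%:Z) (n + 2 * w) =
          fs (sqf (band_apply w b1 z)) (t - w%:Z) (N + 2 * w).
  apply: fs_win_eq; first exact: sqf_ge0.
    exact: supp_sqf (ba_supp w b1 z lo n hsz2).
  exact: supp_sqf (ba_supp w b1 z t N hsz1).
set c' := rho + 3 * e1.
have hratio : fs (sqf (band_apply w b1 y)) (lo - w%:Z) (n + 2 * w) / fs (sqf y) lo n <= rho + e1.
  by rewrite ler_pdivrMr // mulrC.
have hc : (1 + d) * fs (sqf (band_apply w b1 y)) (lo - w%:Z) (n + 2 * w) / fs (sqf y) lo n
     + (1 + d^-1) * Dc w K / N%:R <= c'.
  rewrite -mulrA; apply: (@le_trans _ _ ((1 + d) * (rho + e1) + e1)).
    apply: lerD => //; apply: ler_wpM2l => //; rewrite addr_ge0 // ltW //.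
  have hd : d * (P + e1 + 1) = e1 by rewrite /d mulfVK // gt_eqF // ltr_wpDl // addr_ge0 // ltW.
  rewrite /c'; nra.
have hTz' : fs (sqf (band_apply w b1 z)) (t - w%:Z) (N + 2 * w) <= c' * fs (sqf z) t N.
  rewrite -eT -eS; apply: le_trans hTz _; apply: ler_wpM2r => //; exact: ltW.
have ht : t = (t - 1) + 1 by ring.
have [k' hk'] := hcol (t - 1).
rewrite ht in hsz1.
have [y' [hsy' eS' eT']] := transfer w N b1 b2 (t - 1) k' z hk' hsz1.
have c'0 : 0 <= c' by rewrite addr_ge0 // mulr_ge0 // ltW.
have hub := ub_lemma w b2 y' (k' + 1) N c' hsy'.
rewrite eS' eT' -ht -eS in hub.
have := hub Sz0 c'0; rewrite eS; move/(_ hTz') => hub'.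
apply: le_trans hub' _.
apply: (@le_trans _ _ (Num.sqrt rho + e / 2)); last first.
  rewrite /l2norm -/(nrm2 _) in hxl; rewrite -/rho in hxl.
  have : lower_norm w b1 + e = lower_norm w b1 + e / 2 + e / 2 by field.
  move=> ->; rewrite lerD2r; exact: ltW.
have sq0 : 0 <= Num.sqrt rho + e / 2 by rewrite addr_ge0 // ?sqrtr_ge0 // ltW.
rewrite [X in _ <= X](_ : _ = Num.sqrt ((Num.sqrt rho + e / 2) ^+ 2)); last by rewrite sqrtr_sqr ger0_norm.
rewrite ler_sqrt ?sqr_ge0 // sqrrD sqr_sqrtr // /c' /e1.
have : 0 <= Num.sqrt rho * (e / 2) by rewrite mulr_ge0 // ?sqrtr_ge0 // ltW.
move=> h; have -> : (e / 2) ^+ 2 = 3 * (e ^+ 2 / 12) by field.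
rewrite -[X in _ <= X]addrA lerD2l -subr_ge0 addrK; exact: mulrn_wge0.
Qed.

Lemma conv w (B : int -> int -> R[i]) (Bs : nat -> int -> int -> R[i]) (K : R) :
  0 <= K -> (forall i j, csq (B i j) <= K) -> (forall m i j, csq (Bs m i j) <= K) ->
  (forall N : nat, exists m0 : nat, forall m, (m0 <= m)%N ->
     (forall k, exists k', colsubmx w N (Bs m) k = colsubmx w N B k') /\
     (forall k, exists k', colsubmx w N B k = colsubmx w N (Bs m) k')) ->
  (fun m => lower_norm w (Bs m)) @ \oo --> lower_norm w B.
Proof.
move=> K0 hB hBs hN; apply/cvgrPdist_lt => e e0.
have e2 : 0 < e / 2 by rewrite divr_gt0.
have [N [_ hc]] := compare w K (e / 2) K0 e2.
have [m0 hm0] := hN N.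
near=> m.
have hm : (m0 <= m)%N by near: m; exists m0.
have [h1 h2] := hm0 m hm.
have c1 := hc _ _ (hBs m) hB h1.
have c2 := hc _ _ hB (hBs m) h2.
rewrite ltr_norml; apply/andP; split; lra.
Unshelve. all: by end_near.
Qed.

End Aux.

Theorem proposition4p9 (R : realType) (w : nat) (A : int -> int -> R[i])
  (As : nat -> int -> int -> R[i]) :
  is_band w A ->
  (forall m, is_band w (As m)) ->
  (exists M : R, forall m, op_norm_le w (As m) M) ->
  (forall N : nat, exists m0 : nat, forall m, (m0 <= m)%N -> CN w N (As m) = CN w N A) ->
  ((fun m => lower_norm w (As m)) @ \oo --> lower_norm w A) /\
  (forall lam : R[i],
     (fun m => lower_norm w (minus_scalar (As m) lam)) @ \oo --> lower_norm w (minus_scalar A lam)).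
Proof.
move=> [hbA [MA hopA]] hBs [M hM] hCN.
have hKA := entry_bound R w A MA hbA hopA.
have hKs : forall m i j, csq (As m i j) <= M ^+ 2.
  by move=> m; exact: (entry_bound R w (As m) M (proj1 (hBs m)) (hM m)).
set K := MA ^+ 2 + M ^+ 2.
have K0 : 0 <= K by rewrite addr_ge0 // sqr_ge0.
have hA' : forall i j, csq (A i j) <= K.
  by move=> i j; have := hKA i j; have := sqr_ge0 M; rewrite /K; lra.
have hs' : forall m i j, csq (As m i j) <= K.
  by move=> m i j; have := hKs m i j; have := sqr_ge0 MA; rewrite /K; lra.
have hcol : forall N : nat, exists m0 : nat, forall m, (m0 <= m)%N ->
     (forall k, exists k', colsubmx w N (As m) k = colsubmx w N A k') /\
     (forall k, exists k', colsubmx w N A k = colsubmx w N (As m) k').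
  move=> N; have [m0 h] := hCN N; exists m0 => m hm; have E := h m hm; split => k.
    have : CN w N A (colsubmx w N (As m) k) by rewrite -E; exists k.
    by move=> [k' _ hk']; exists k'.
  have : CN w N (As m) (colsubmx w N A k) by rewrite E; exists k.
  by move=> [k' _ hk']; exists k'.
split; first exact: (@conv R w A As K K0 hA' hs' hcol).
move=> lam.
apply: (@conv R w (minus_scalar A lam) (fun m => minus_scalar (As m) lam) (2 * K + 2 * csq lam)).
- by rewrite addr_ge0 // mulr_ge0 // csq_ge0.
- exact: ms_entry.
- by move=> m; exact: ms_entry.
move=> N; have [m0 h] := hcol N; exists m0 => m hm; have [h1 h2] := h m hm; split => k.
  by have [k' hk'] := h1 k; exists k'; apply: ms_colsub.
by have [k' hk'] := h2 k; exists k'; apply: ms_colsub.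
Qed.
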